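(* For finite magmas, the laws $\mathrm{x}\simeq(\mathrm{x}\diamond(\mathrm{x}\diamond\mathrm{y}))\diamond\mathrm{y}$ and $\mathrm{x}\simeq(\mathrm{x}\diamond\mathrm{y})\diamond((\mathrm{x}\diamond\mathrm{y})\diamond\mathrm{y})$ are equivalent: a finite magma satisfies one if and only if it satisfies the other.
   Context: A magma is a set with a binary operation $\diamond$; it satisfies a law if the identity holds for all assignments of variables. *)

(* Defs.v *)
From mathcomp Require Import all_boot.
Set Implicit Arguments.
Unset Strict Implicit.
Unset Printing Implicit Defensive.

Definition law1 (M : Type) (op : M -> M -> M) : Prop :=
  forall x y : M, x = op (op x (op x y)) y.

Definition law2 (M : Type) (op : M -> M -> M) : Prop :=
  forall x y : M, x = op (op x y) (op (op x y) y).

(* Main.v *)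
Require Import Defs.
From mathcomp Require Import all_boot.

Theorem mainTheorem16 (M : finType) (op : M -> M -> M) :
  law1 op <-> law2 op.
Proof.
split=> H x y.
- have K : cancel (fun z => op z (op z y)) (fun z => op z y) by move=> z; rewrite -H.
  exact: (esym (canF_sym K x)).
- have K : cancel (fun z => op z y) (fun z => op z (op z y)) by move=> z; rewrite -H.
  exact: (esym (canF_sym K x)).
Qed.
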